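(* Let $G$ be a finite abstract simplicial complex with connection matrix $L$ and $g=L^{-1}$. Then for every $x\in G$, $$V(x):=\sum_{y\in G}g(x,y)=\omega(x)\,g(x,x)=k(x),$$ where $k(x)=\omega(x)\big(1-\chi(S(x))\big)$.
   Context: A finite abstract simplicial complex $G$ is a finite set of non-empty finite sets closed under taking non-empty subsets; $\omega(x)=(-1)^{|x|-1}$. The connection matrix $L$ has $L(x,y)=1$ if $x\cap y\neq\emptyset$ and $0$ otherwise. The graph $G_1$ has vertex set $G$, with $x\neq y$ adjacent iff one contains the other. $S(x)=\{y\in G: y\subsetneq x\text{ or }x\subsetneq y\}$, and $\chi(S(x))$ is the Euler characteristic of the clique complex of the subgraph of $G_1$ induced on $S(x)$. *)

(* Defs.v *)
From mathcomp Require Import all_boot all_order all_algebra.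
Set Implicit Arguments. Unset Strict Implicit. Unset Printing Implicit Defensive.
Import GRing.Theory Num.Theory.
Local Open Scope ring_scope.

Definition simplicial_complex (T : finType) (G : {set {set T}}) : Prop :=
  (forall x, x \in G -> x != set0) /\
  (forall x y : {set T}, x \in G -> y \subset x -> y != set0 -> y \in G).

Definition face (T : finType) (G : {set {set T}}) (i : 'I_#|G|) : {set T} :=
  enum_val i.

Definition omega (T : finType) (x : {set T}) : rat := (-1) ^+ (#|x|.-1).

Definition conn_mat (T : finType) (G : {set {set T}}) : 'M[rat]_#|G| :=
  \matrix_(i, j) (if (face i :&: face j) != set0 then 1 else 0).

Definition Sx (T : finType) (G : {set {set T}}) (x : {set T}) : {set {set T}} :=
  [set y in G | (y \proper x) || (x \proper y)].

Definition is_clique (T : finType) (A : {set {set T}}) : bool :=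
  [forall y in A, forall z in A, (y != z) ==> ((y \proper z) || (z \proper y))].

(* Euler characteristic of the clique complex of the subgraph of G_1 induced on S(x):
   sum over non-empty cliques C of (-1)^(|C|-1). *)
Definition chiS (T : finType) (G : {set {set T}}) (x : {set T}) : rat :=
  \sum_(C : {set {set T}} | [&& C \subset Sx G x, C != set0 & is_clique C])
     (-1) ^+ (#|C|.-1).

Definition kfun (T : finType) (G : {set {set T}}) (x : {set T}) : rat :=
  omega x * (1 - chiS G x).

(* Main.v *)
Require Import Defs.
From mathcomp Require Import all_boot all_order all_algebra.
From mathcomp Require Import lra zify ring.
Set Implicit Arguments. Unset Strict Implicit. Unset Printing Implicit Defensive.
Import GRing.Theory Num.Theory.
Local Open Scope ring_scope.

Definition esg (T : finType) (y : {set T}) : rat := (-1) ^+ #|y|.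

Lemma tog_inv (T : finType) (a : T) :
  involutive (fun m : {set T} => if a \in m then m :\ a else a |: m).
Proof.
move=> m /=; case: (boolP (a \in m)) => am.
  by rewrite setD11 /= setD1K.
by rewrite setU11 setU1K.
Qed.

Lemma alt_sum (T : finType) (lo hi : {set T}) :
  \sum_(m : {set T} | (lo \subset m) && (m \subset hi)) esg m =
  if lo == hi then esg lo else 0.
Proof.
case: eqP => [<-|nlh].
  rewrite (big_pred1 lo) // => m /=; by rewrite eq_sym eqEsubset andbC.
case: (boolP (lo \subset hi)) => slh; last first.
  rewrite big_pred0 // => m; apply/negP => /andP [h1 h2].
  by move/negP: slh; apply; apply: subset_trans h1 h2.
have : lo \proper hi by rewrite properEneq slh andbT; apply/eqP.
case/properP => _ [a ahi alo].
set S := (X in X = _).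
have hS : S = - S.
  rewrite {2}/S (reindex_inj (inv_inj (tog_inv a))) /= -sumrN.
  apply: eq_big => m.
    case: (a \in m).
      rewrite subsetD1 alo andbT; congr (_ && _).
      apply/idP/idP => h; first by apply: subset_trans (subD1set _ _) h.
      apply/subsetP => x xm; case: (eqVneq x a) => [->//|xa].
      by apply: (subsetP h); rewrite in_setD1 xa.
    rewrite subUset sub1set ahi /=; congr (_ && _).
    apply/idP/idP => h; first by apply: subset_trans h (subsetU1 _ _).
    apply/subsetP => x xlo; have := subsetP h x xlo; rewrite in_setU1.
    by case/orP => // /eqP ex; move: alo; rewrite -ex xlo.
  move=> _; rewrite /esg.
  case: (boolP (a \in m)) => am.
    by rewrite -{1}(setD1K am) cardsU1 setD11 /= exprS mulN1r.
  by rewrite cardsU1 am add1n exprS mulN1r opprK.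
lra.
Qed.

Definition clq (X : finType) (r : rel X) (C : {set X}) : bool :=
  [forall y in C, forall z in C, (y != z) ==> (r y z || r z y)].
Definition cs (X : finType) (r : rel X) (P : {set X}) : rat :=
  \sum_(C : {set X} | (C \subset P) && clq r C) (-1) ^+ #|C|.
Definition ismin (X : finType) (r : rel X) (C : {set X}) (m : X) : bool :=
  (m \in C) && [forall y in C, (y != m) ==> r m y].

Lemma clqP (X : finType) (r : rel X) (C : {set X}) :
  reflect (forall y z, y \in C -> z \in C -> y != z -> r y z || r z y) (clq r C).
Proof.
apply: (iffP forall_inP) => [H y z yC zC yz | H y yC].
  by move/forall_inP: (H y yC) => /(_ z zC) /implyP; apply.
by apply/forall_inP => z zC; apply/implyP; exact: H.
Qed.

Lemma clq_sub (X : finType) (r : rel X) (C D : {set X}) :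
  C \subset D -> clq r D -> clq r C.
Proof.
move=> CD /clqP H; apply/clqP => y z yC zC; apply: H; exact: (subsetP CD).
Qed.

Lemma cs_min (X : finType) (r : rel X) (mu : X -> nat)
  (hmu : forall y z, r y z -> (mu y < mu z)%N) (P : {set X}) :
  cs r P = 1 - \sum_(m in P) cs r [set y in P | r m y].
Proof.
rewrite /cs (bigD1 set0) /=; last first.
  by rewrite sub0set; apply/clqP => y z; rewrite in_set0.
rewrite cards0 expr0; congr (1 + _).
have step1 : forall C : {set X}, ((C \subset P) && clq r C) && (C != set0) ->
    (-1) ^+ #|C| = \sum_(m | ismin r C m) ((-1) ^+ #|C| : rat).
  move=> C /andP [/andP [CP cC] C0].
  have [y0 y0C] : exists y0, y0 \in C by apply/set0Pn.
  case: (arg_minnP mu y0C) => m mC mmin.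
  have mism : ismin r C m.
    apply/andP; split => //; apply/forall_inP => y yC; apply/implyP => ym.
    move/clqP: cC => /(_ m y mC yC); rewrite eq_sym ym => /(_ isT) /orP [//|/hmu].
    by rewrite ltnNge mmin.
  rewrite (big_pred1 m) // => m'; apply/idP/eqP => [/andP [m'C /forall_inP H] | -> //].
  apply/eqP; apply: contraT => nm.
  have := H m mC; rewrite eq_sym nm /= => /hmu.
  move/andP: mism => [_ /forall_inP /(_ m' m'C)]; rewrite nm /= => /hmu.
  move=> h1 h2; have := ltn_trans h1 h2; by rewrite ltnn.
rewrite (eq_bigr _ step1).
rewrite (exchange_big_dep (fun m => m \in P)) /=; last first.
  by move=> C m /andP [/andP [CP _] _] /andP [mC _]; apply: (subsetP CP).
rewrite -sumrN; apply: eq_bigr => m mP.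
rewrite (reindex_onto (fun C => m |: C) (fun C => C :\ m)) /=; last first.
  by move=> C /andP [_ /andP [mC _]]; rewrite setD1K.
rewrite -sumrN; apply: eq_big => C.
  apply/idP/idP.
    move=> /andP [/andP [/andP [/andP [mCP cmC] _] /andP [_ /forall_inP mmin]] /eqP e].
    have nmC : m \notin C by rewrite -e setD11.
    apply/andP; split; last by apply: clq_sub cmC; apply: subsetU1.
    apply/subsetP => y yC; rewrite inE.
    have ymC : y \in m |: C by rewrite in_setU1 yC orbT.
    rewrite (subsetP mCP y ymC) /=.
    have ym : y != m by apply: contraNneq nmC => <-.
    by have := mmin y ymC; rewrite ym.
  move=> /andP [CQ cC].
  have hr : forall y, y \in C -> (y \in P) && r m y.
    by move=> y /(subsetP CQ); rewrite inE.
  have nmC : m \notin C.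
    by apply/negP => /hr /andP [_ /hmu]; rewrite ltnn.
  rewrite setU1K // eqxx andbT.
  apply/andP; split; first (apply/andP; split; first (apply/andP; split)).
  - rewrite subUset sub1set mP /=; by apply/subsetP => y /hr /andP [].
  - apply/clqP => y z; rewrite !in_setU1.
    move=> /orP [/eqP->|yC] /orP [/eqP->|zC] yz.
    + by rewrite eqxx in yz.
    + by have /andP [_ ->] := hr z zC.
    + by have /andP [_ ->] := hr y yC; rewrite orbT.
    + by move/clqP: cC; apply.
  - by apply/set0Pn; exists m; rewrite setU11.
  - rewrite /ismin setU11 /=; apply/forall_inP => y; rewrite in_setU1.
    case/orP => [/eqP->|yC]; first by rewrite eqxx.
    by have /andP [_ ->] := hr y yC; rewrite implybT.
move=> /andP [_ /eqP e].
have nmC : m \notin C by rewrite -e setD11.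
by rewrite cardsU1 nmC add1n exprS mulN1r.
Qed.

Lemma cs0 (X : finType) (r : rel X) (mu : X -> nat)
  (hmu : forall y z, r y z -> (mu y < mu z)%N) : cs r set0 = 1.
Proof. by rewrite (cs_min hmu) big_pred0 ?subr0 // => m; rewrite in_set0. Qed.

Lemma cs_prod (X : finType) (r : rel X) (mu : X -> nat)
  (hmu : forall y z, r y z -> (mu y < mu z)%N) (n : nat) (A B : {set X}) :
  (#|A| <= n)%N -> (forall a b, a \in A -> b \in B -> r a b) ->
  cs r (A :|: B) = cs r A * cs r B.
Proof.
elim: n A => [|n IH] A hA hAB.
  move: hA; rewrite leqn0 cards_eq0 => /eqP ->.
  by rewrite set0U (cs0 hmu) mul1r.
have nBA : forall m y, m \in B -> y \in A -> r m y = false.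
  move=> m y mB yA; apply/negP => /hmu h1.
  by have := ltn_trans h1 (hmu _ _ (hAB _ _ yA mB)); rewrite ltnn.
rewrite (cs_min hmu (A :|: B)) (cs_min hmu A) (cs_min hmu B).
rewrite (bigID (fun m => m \in A)) /=.
have e1 : \sum_(i in A :|: B | i \in A) cs r [set y in A :|: B | r i y] =
          \sum_(i in A) cs r [set y in A | r i y] * cs r B.
  apply: eq_big => [m|m /andP [_ mA]]; first by rewrite in_setU; case: (m \in A); rewrite ?andbT ?andbF.
  have -> : [set y in A :|: B | r m y] = [set y in A | r m y] :|: B.
    apply/setP => y; rewrite !inE.
    case: (boolP (y \in B)) => yB; last by rewrite !orbF.
    by rewrite !orbT /= (hAB m y mA yB).
  apply: IH.
    have : [set y in A | r m y] \subset A :\ m.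
      apply/subsetP => y; rewrite !inE => /andP [yA rmy]; rewrite yA andbT.
      by apply/eqP => ym; move: rmy; rewrite ym => /hmu; rewrite ltnn.
    move/subset_leq_card => h; have := cardsD1 m A; rewrite mA add1n => hc.
    lia.
  by move=> a b; rewrite inE => /andP [aA _] bB; apply: hAB.
have e2 : \sum_(i in A :|: B | i \notin A) cs r [set y in A :|: B | r i y] =
          \sum_(i in B) cs r [set y in B | r i y].
  apply: eq_big => [m|m /andP [mAB mA]].
    rewrite in_setU; case: (boolP (m \in A)) => mA /=; last by rewrite andbT.
    apply/esym/negP => mB; have := hmu _ _ (hAB m m mA mB); by rewrite ltnn.
  have mB : m \in B by move: mAB; rewrite in_setU (negbTE mA).
  congr (cs r _); apply/setP => y; rewrite !inE.
  by case: (boolP (y \in A)) => yA //=; rewrite (nBA m y mB yA) andbF.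
rewrite e1 e2 -big_distrl /= (cs_min hmu B).
set SA := \sum_(i in A) _; set SB := \sum_(i in B) _.
ring.
Qed.

Definition rP (T : finType) : rel {set T} := fun y z => y \proper z.
Definition rF (T : finType) : rel {set T} := fun y z => z \proper y.
Definition Up (T : finType) (G : {set {set T}}) (x : {set T}) := [set y in G | x \proper y].
Definition Dn (T : finType) (G : {set {set T}}) (x : {set T}) := [set y in G | y \proper x].
Definition aa (T : finType) (G : {set {set T}}) (x : {set T}) := \sum_(z in G | x \subset z) esg z.

Lemma esg_sq (T : finType) (x : {set T}) : esg x * esg x = 1.
Proof. by rewrite /esg -exprD addnn -mul2n exprM sqrrN !expr1n. Qed.

Lemma hmuP (T : finType) (y z : {set T}) : rP y z -> (#|y| < #|z|)%N.
Proof. exact: proper_card. Qed.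

Lemma hmuF (T : finType) (y z : {set T}) : rF y z -> (#|T| - #|y| < #|T| - #|z|)%N.
Proof.
move=> /proper_card h; have h2 : (#|y| <= #|T|)%N by apply: max_card.
rewrite /= in h. lia.
Qed.

Lemma sc_ne (T : finType) (G : {set {set T}}) (x : {set T}) :
  simplicial_complex G -> x \in G -> x != set0.
Proof. by case=> h _; apply: h. Qed.

Lemma sc_sub (T : finType) (G : {set {set T}}) (x y : {set T}) :
  simplicial_complex G -> x \in G -> y \subset x -> y != set0 -> y \in G.
Proof. by case=> _ h; apply: h. Qed.

Lemma up_step (T : finType) (G : {set {set T}}) (hG : simplicial_complex G) x :
  x \in G ->
  (forall m, m \in G -> x \proper m -> cs (@rP T) (Up G m) = esg m * aa G m) ->
  cs (@rP T) (Up G x) = esg x * aa G x.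
Proof.
move=> xG IH; rewrite (cs_min (@hmuP T)).
rewrite (eq_bigr (fun m => esg m * aa G m)); last first.
  move=> m; rewrite inE => /andP [mG xm].
  have -> : [set y in Up G x | rP m y] = Up G m.
    apply/setP => y; rewrite !inE /rP.
    case: (boolP (m \proper y)) => my; rewrite ?andbF ?andbT //.
    by rewrite (proper_trans xm my) andbT.
  exact: IH.
have x0 := sc_ne hG xG.
under eq_bigr do rewrite /aa big_distrr.
rewrite (exchange_big_dep (fun z => (z \in G) && (x \subset z))) /=; last first.
  move=> m z; rewrite inE => /andP [_ xm] /andP [zG mz].
  by rewrite zG (subset_trans (proper_sub xm) mz).
under eq_bigr do rewrite -big_distrl.
rewrite (eq_bigr (fun z => ((if x == z then esg x else 0) - esg x) * esg z)); last first.
  move=> z /andP [zG xz]; congr (_ * _).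
  rewrite -(alt_sum x z) [X in _ = X - _](bigD1 x) /=; last by rewrite subxx.
  rewrite [esg x + _]addrC addrK.
  apply: eq_bigl => m; rewrite inE properEneq.
  apply/idP/idP.
    move=> /andP [/andP [_ /andP [xm1 xm2]] /andP [_ mz]].
    by rewrite xm2 mz eq_sym xm1.
  move=> /andP [/andP [xm mz] mx]; rewrite zG mz xm eq_sym mx /= !andbT.
  apply: (sc_sub hG zG mz); apply: contraNneq x0 => m0.
  by move: xm; rewrite m0 subset0.
rewrite (eq_bigr (fun z => (if x == z then esg x * esg z else 0) - esg x * esg z)); last first.
  by move=> z _; case: (x == z); rewrite ?mulrBl ?mul0r.
rewrite sumrB -big_distrr /= -/(aa G x).
rewrite (bigD1 x) /=; last by rewrite xG subxx.
rewrite eqxx big1 ?addr0; last by move=> z /andP [_ /negbTE]; rewrite eq_sym => ->.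
rewrite esg_sq; lra.
Qed.

Lemma up_cs (T : finType) (G : {set {set T}}) (hG : simplicial_complex G) n :
  forall x : {set T}, (#|T| - #|x| <= n)%N -> x \in G ->
  cs (@rP T) (Up G x) = esg x * aa G x.
Proof.
elim: n => [|n IH] x hx xG; apply: up_step => // m mG xm.
  have := proper_card xm; have : (#|m| <= #|T|)%N by apply: max_card.
  move: hx. lia.
apply: IH => //.
have := proper_card xm; have : (#|m| <= #|T|)%N by apply: max_card.
move: hx. lia.
Qed.

Lemma clq_flip (X : finType) (r : rel X) (C : {set X}) :
  clq r C = clq (fun y z => r z y) C.
Proof.
apply/clqP/clqP => H y z yC zC yz; by rewrite orbC; apply: H.
Qed.

Lemma cs_flip (T : finType) (P : {set {set T}}) : cs (@rP T) P = cs (@rF T) P.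
Proof. by apply: eq_bigl => C; rewrite [clq (@rP T) C]clq_flip. Qed.

Lemma dn_step (T : finType) (G : {set {set T}}) (hG : simplicial_complex G) x :
  x \in G ->
  (forall m, m \in G -> m \proper x -> cs (@rF T) (Dn G m) = - esg m) ->
  cs (@rF T) (Dn G x) = - esg x.
Proof.
move=> xG IH; rewrite (cs_min (@hmuF T)).
rewrite (eq_bigr (fun m => - esg m)); last first.
  move=> m; rewrite inE => /andP [mG mx].
  have -> : [set y in Dn G x | rF m y] = Dn G m.
    apply/setP => y; rewrite !inE /rF.
    case: (boolP (y \proper m)) => ym; rewrite ?andbF ?andbT //.
    by rewrite (proper_trans ym mx) andbT.
  exact: IH.
have x0 := sc_ne hG xG.
have h := alt_sum set0 x; rewrite eq_sym (negbTE x0) in h.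
rewrite (bigD1 set0) /= in h; last by rewrite !sub0set.
rewrite (bigD1 x) /= in h; last by rewrite sub0set subxx.
have -> : \sum_(i in Dn G x) - esg i = - \sum_(i : {set T} | ((set0 \subset i) && (i \subset x) && (i != set0)) && (i != x)) esg i.
  rewrite sumrN; congr (- _); apply: eq_bigl => m; rewrite inE properEneq sub0set /=.
  apply/idP/idP.
    move=> /andP [mG /andP [mx mx']]; rewrite mx mx' (sc_ne hG mG) //.
  move=> /andP [/andP [mx m0] mx']; rewrite mx mx' /= andbT.
  exact: (sc_sub hG xG mx m0).
move: h; rewrite /esg cards0 expr0. lra.
Qed.

Lemma dn_cs (T : finType) (G : {set {set T}}) (hG : simplicial_complex G) n :
  forall x : {set T}, (#|x| <= n)%N -> x \in G ->
  cs (@rF T) (Dn G x) = - esg x.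
Proof.
elim: n => [|n IH] x hx xG; apply: dn_step => // m mG mx.
  have := proper_card mx; move: hx. lia.
apply: IH => //.
have := proper_card mx; move: hx. lia.
Qed.

Lemma chi_cs (T : finType) (G : {set {set T}}) (x : {set T}) :
  1 - chiS G x = cs (@rP T) (Sx G x).
Proof.
rewrite /chiS /cs [RHS](bigD1 set0) /=; last first.
  by rewrite sub0set /=; apply/clqP => y z; rewrite in_set0.
rewrite cards0 expr0 -sumrN; congr (1 + _).
apply: eq_big => C; first by rewrite -andbA [clq _ C && _]andbC.
move=> /and3P [_ C0 _].
have : (0 < #|C|)%N by rewrite card_gt0.
by case: #|C| => // k _; rewrite exprS mulN1r.
Qed.

Lemma chi_val (T : finType) (G : {set {set T}}) (hG : simplicial_complex G) (x : {set T}) :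
  x \in G -> 1 - chiS G x = - aa G x.
Proof.
move=> xG; rewrite chi_cs.
have -> : Sx G x = Dn G x :|: Up G x.
  by apply/setP => y; rewrite !inE andb_orr.
rewrite (cs_prod (@hmuP T) (leqnn #|Dn G x|)); last first.
  move=> a b; rewrite !inE => /andP [_ ax] /andP [_ xb]; exact: proper_trans ax xb.
rewrite cs_flip (dn_cs hG (leqnn #|x|) xG) (up_cs hG (leqnn (#|T| - #|x|)) xG).
by rewrite mulrA mulNr esg_sq mulN1r.
Qed.

Lemma sumG (T : finType) (G : {set {set T}}) (F : {set T} -> rat) :
  \sum_(j < #|G|) F (face j) = \sum_(y in G) F y.
Proof. by rewrite (big_enum_val (A := mem G)) /face. Qed.

Lemma omega_esg (T : finType) (x : {set T}) : x != set0 -> omega x = - esg x.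
Proof.
rewrite -card_gt0 /omega /esg; case: #|x| => // k _.
by rewrite exprS mulN1r opprK.
Qed.

Lemma inner_sum (T : finType) (G : {set {set T}}) (hG : simplicial_complex G)
  (x z w : {set T}) : z \in G -> w \subset z ->
  \sum_(y : {set T} | ((y \in G) && (x :&: y != set0)) && ((z \in G) && (y :|: w \subset z))) esg y
  = - (if z \subset x then 1 else 0).
Proof.
move=> zG wz.
have h1 := alt_sum set0 z; have h2 := alt_sum set0 (z :\: x).
rewrite eq_sym (negbTE (sc_ne hG zG)) in h1.
have es0 : esg (set0 : {set T}) = 1 by rewrite /esg cards0.
rewrite eq_sym setD_eq0 es0 in h2.
rewrite (bigID (fun y => x :&: y == set0)) /= in h1.
have e1 : \sum_(i : {set T} | (set0 \subset i) && (i \subset z) && (x :&: i == set0)) esg i =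
          \sum_(m : {set T} | (set0 \subset m) && (m \subset z :\: x)) esg m.
  apply: eq_bigl => y; rewrite !sub0set /= subsetD setI_eq0 disjoint_sym //.
have e2 : \sum_(y : {set T} | ((y \in G) && (x :&: y != set0)) && ((z \in G) && (y :|: w \subset z))) esg y
        = \sum_(i : {set T} | (set0 \subset i) && (i \subset z) && ~~ (x :&: i == set0)) esg i.
  apply: eq_bigl => y; rewrite sub0set zG subUset wz /= andbT.
  apply/idP/idP.
    by move=> /andP [/andP [_ ->] ->].
  move=> /andP [yz xy]; rewrite xy yz /= !andbT.
  apply: (sc_sub hG zG yz); apply: contraNneq xy => ->; by rewrite setI0.
rewrite e2; rewrite e1 h2 in h1.
move: h1; case: (z \subset x) => h1; lra.
Qed.

Definition hmat (T : finType) (G : {set {set T}}) : 'M[rat]_#|G| :=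
  \matrix_(i, k) - (esg (face i) * esg (face k) *
                     \sum_(z in G | face i :|: face k \subset z) esg z).

Lemma conn_h (T : finType) (G : {set {set T}}) (hG : simplicial_complex G) :
  conn_mat G *m hmat G = 1%:M.
Proof.
apply/matrixP => i k; rewrite !mxE.
have xG : face i \in G by apply: enum_valP.
have wG : face k \in G by apply: enum_valP.
have -> : (i == k) = (face k == face i).
  by rewrite eq_sym /face (inj_eq enum_val_inj).
move: xG wG; set x := face i; set w := face k => xG wG.
under eq_bigr do rewrite !mxE.
transitivity (\sum_(y in G) (if x :&: y != set0 then 1 else 0) *
   - (esg y * esg w * \sum_(z in G | y :|: w \subset z) esg z)).
  by rewrite -sumG.
rewrite (eq_bigr (fun y => if x :&: y != set0 then
   - esg w * \sum_(z in G | y :|: w \subset z) (esg y * esg z) else 0)); last first.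
  move=> y _; case: ifP => _; rewrite ?mul0r // mul1r -big_distrr /=.
  ring.
rewrite -big_mkcondr /= -big_distrr /=.
rewrite (exchange_big_dep (fun z : {set T} => (z \in G) && (w \subset z))) /=; last first.
  by move=> y z _ /andP [-> ]; rewrite subUset => /andP [].
under eq_bigr do rewrite -big_distrl /=.
rewrite (eq_bigr (fun z : {set T} => if z \subset x then - esg z else 0)); last first.
  move=> z /andP [zG wz]; rewrite (inner_sum hG x zG wz).
  by case: ifP => _; rewrite ?oppr0 ?mul0r ?mulN1r.
rewrite -big_mkcondr /= sumrN.
rewrite (eq_bigl (fun z : {set T} => (w \subset z) && (z \subset x))); last first.
  move=> z; apply/idP/idP; first by move=> /andP [/andP [_ ->] ->].
  move=> /andP [wz zx]; rewrite wz zx !andbT.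
  apply: (sc_sub hG xG zx); apply: contraNneq (sc_ne hG wG) => z0.
  by move: wz; rewrite z0 subset0.
rewrite alt_sum; case: (w == x); last by rewrite oppr0 mulr0.
by rewrite mulrNN esg_sq.
Qed.

Lemma g_eq (T : finType) (G : {set {set T}}) (hG : simplicial_complex G) :
  invmx (conn_mat G) = hmat G.
Proof.
have [Lu _] := mulmx1_unit (conn_h hG).
by rewrite -[invmx _]mulmx1 -(conn_h hG) mulmxA mulVmx // mul1mx.
Qed.

Theorem mainTheorem14 (T : finType) (G : {set {set T}}) :
  simplicial_complex G ->
  let g := invmx (conn_mat G) in
  forall i : 'I_#|G|,
    (\sum_(j < #|G|) g i j = omega (face i) * g i i) /\
    (omega (face i) * g i i = kfun G (face i)).
Proof.
move=> hG g i; rewrite /g (g_eq hG).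
have xG : face i \in G by apply: enum_valP.
have hii : hmat G i i = - aa G (face i).
  by rewrite mxE setUid esg_sq mul1r.
rewrite hii omega_esg ?(sc_ne hG xG) // mulrNN; split.
  under eq_bigr do rewrite mxE.
  transitivity (\sum_(y in G) - (esg (face i) * esg y *
                  \sum_(z in G | face i :|: y \subset z) esg z)).
    by rewrite -sumG.
  move: xG; set x := face i => xG.
  rewrite (eq_bigr (fun y => - esg x * \sum_(z in G | x :|: y \subset z) (esg y * esg z))); last first.
    move=> y _; rewrite -big_distrr /=; ring.
  rewrite -big_distrr /=.
  rewrite (exchange_big_dep (fun z : {set T} => (z \in G) && (x \subset z))) /=; last first.
    by move=> y z _ /andP [-> ]; rewrite subUset => /andP [].
  under eq_bigr do rewrite -big_distrl /=.
  rewrite (eq_bigr (fun z => - esg z)); last first.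
    move=> z /andP [zG xz].
    have h := alt_sum set0 z.
    rewrite eq_sym (negbTE (sc_ne hG zG)) (bigD1 set0) /= in h; last by rewrite !sub0set.
    have es0 : esg (set0 : {set T}) = 1 by rewrite /esg cards0.
    rewrite es0 in h.
    have -> : \sum_(y : {set T} | (y \in G) && ((z \in G) && (x :|: y \subset z))) esg y = -1.
      suff -> : \sum_(y : {set T} | (y \in G) && ((z \in G) && (x :|: y \subset z))) esg y =
        \sum_(i : {set T} | (set0 \subset i) && (i \subset z) && (i != set0)) esg i by lra.
      apply: eq_bigl => y; rewrite sub0set zG subUset xz /=.
      apply/idP/idP; first by move=> /andP [yG ->]; rewrite (sc_ne hG yG).
      by move=> /andP [yz y0]; rewrite yz andbT; apply: (sc_sub hG zG yz).
    by rewrite mulN1r.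
  by rewrite sumrN mulrNN.
by rewrite /kfun chi_val // omega_esg ?(sc_ne hG xG) // mulrNN.
Qed.
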